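(* Let $G$ be a finitely generated group hyperbolic relative to a finite collection $\mathcal P=\{P_\lambda\}_{\lambda\in\Lambda}$, $S$ a finite generating set, and $n\ge1$. Then the $G$-action on the $n$-Rips complex $\Gamma_n^\blacktriangle$ is cocompact, i.e. there are finitely many $G$-orbits of simplices.
   Context: Let $\Gamma$ be the Cayley graph of $G$ with respect to $S$, $V=G$, $W$ the set of cosets $gP_\lambda$. Relative hyperbolicity means the coned-off Cayley graph (vertex set $V\cup W$, edges of $\Gamma$ plus an edge $(v,w)$ whenever $v\in w$) is fine (for every edge $e$ and integer $m$, finitely many circuits of length $\le m$ contain $e$) and $\delta$-hyperbolic. Extend $|\cdot,\cdot|_S$ to $V\cup W$ via distances in $\Gamma$ between the corresponding elements/cosets. $\Gamma_n$ has vertex set $V\cup W$ and an edge between $u\ne u'$ whenever $|u,u'|_S\le n$; $\Gamma_n^\blacktriangle$ is obtained by spanning simplices on all cliques of $\Gamma_n$. *)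

(* Defs.v *)
From mathcomp Require Import all_boot.
From Stdlib Require List.

Set Implicit Arguments.
Unset Strict Implicit.
Unset Printing Implicit Defensive.

Section RelHyp.

Context {G : Type} (mul : G -> G -> G) (one : G) (inv : G -> G).

Record is_group : Prop := IsGroup {
  mulA : forall x y z, mul x (mul y z) = mul (mul x y) z;
  mul1g : forall x, mul one x = x;
  mulg1 : forall x, mul x one = x;
  mulVg : forall x, mul (inv x) x = one;
  mulgV : forall x, mul x (inv x) = one }.

Definition is_subgroup (H : G -> Prop) : Prop :=
  H one /\ (forall x y, H x -> H y -> H (mul x y)) /\ (forall x, H x -> H (inv x)).

Definition word_prod (l : seq G) : G := foldr mul one l.
Definition is_S_word (S : seq G) (l : seq G) : Prop :=
  forall x, List.In x l -> List.In x S \/ List.In (inv x) S.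

Definition generates (S : seq G) : Prop :=
  forall g, exists l, is_S_word S l /\ g = word_prod l.

Definition Sdist_le (S : seq G) (n : nat) (a b : G) : Prop :=
  exists l, is_S_word S l /\ (size l <= n)%N /\ b = mul a (word_prod l).

Definition lcoset (g : G) (H : G -> Prop) : G -> Prop := fun x => H (mul (inv g) x).

Context {Lam : finType} (P : Lam -> G -> Prop).

(* Vertices: V = G (left) and W = cosets g P_lam (right, tagged with lam). *)
Definition Vertex := (G + (Lam * (G -> Prop)))%type.

Definition is_vertex (v : Vertex) : Prop :=
  match v with
  | inl _ => True
  | inr (lam, A) => exists g, A = lcoset g (P lam)
  end.

Definition carrier (v : Vertex) : G -> Prop :=
  match v with
  | inl g => fun x => x = g
  | inr (_, A) => A
  end.

Definition coned_adj (S : seq G) (u v : Vertex) : Prop :=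
  is_vertex u /\ is_vertex v /\
  match u, v with
  | inl g, inl h => g <> h /\ exists s, List.In s S /\ (h = mul g s \/ g = mul h s)
  | inl g, inr (_, A) => A g
  | inr (_, A), inl g => A g
  | _, _ => False
  end.

Definition rips_adj (S : seq G) (n : nat) (u v : Vertex) : Prop :=
  is_vertex u /\ is_vertex v /\ u <> v /\
  exists a b, carrier u a /\ carrier v b /\ Sdist_le S n a b.

Definition is_simplex (S : seq G) (n : nat) (sigma : Vertex -> Prop) : Prop :=
  (exists l : seq Vertex, forall x, sigma x <-> List.In x l) /\
  (exists x, sigma x) /\
  (forall u, sigma u -> is_vertex u) /\
  (forall u v, sigma u -> sigma v -> u <> v -> rips_adj S n u v).

Definition act (g : G) (v : Vertex) : Vertex :=
  match v with
  | inl h => inl (mul g h)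
  | inr (lam, A) => inr (lam, fun x => A (mul (inv g) x))
  end.

Definition act_set (g : G) (sigma : Vertex -> Prop) : Vertex -> Prop :=
  fun v => exists w, sigma w /\ v = act g w.

End RelHyp.

Section Graphs.
Context {T : Type} (adj : T -> T -> Prop).

Definition cyc_edges (c : seq T) : seq (T * T) := zip c (rot 1 c).

Definition is_circuit (c : seq T) : Prop :=
  (3 <= size c)%N /\ List.NoDup c /\ List.Forall (fun p => adj p.1 p.2) (cyc_edges c).

Definition edge_in_circuit (u v : T) (c : seq T) : Prop :=
  List.In (u, v) (cyc_edges c) \/ List.In (v, u) (cyc_edges c).

Definition fine : Prop :=
  forall u v, adj u v -> forall m : nat,
    exists L : seq (seq T), forall c, is_circuit c -> (size c <= m)%N ->
      edge_in_circuit u v c -> List.In c L.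

Definition is_walk (u v : T) (p : seq T) : Prop :=
  List.Forall (fun e => adj e.1 e.2) (zip (u :: p) p) /\ last u p = v.

Definition gdist (u v : T) (k : nat) : Prop :=
  (exists p, is_walk u v p /\ size p = k) /\ (forall p, is_walk u v p -> (k <= size p)%N).

Definition hyperbolic (delta : nat) : Prop :=
  forall x y z w dxy dzw dxz dyw dxw dyz,
    gdist x y dxy -> gdist z w dzw -> gdist x z dxz -> gdist y w dyw ->
    gdist x w dxw -> gdist y z dyz ->
    (dxy + dzw <= maxn (dxz + dyw) (dxw + dyz) + 2 * delta)%N.

End Graphs.

Definition rel_hyperbolic {G : Type} (mul : G -> G -> G) (inv : G -> G)
  {Lam : finType} (P : Lam -> G -> Prop) (S : seq G) : Prop :=
  fine (coned_adj mul inv P S) /\ exists delta, hyperbolic (coned_adj mul inv P S) delta.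

(* Main.v *)
Require Import Defs.
From mathcomp Require Import all_boot.
From Stdlib Require List.
From Stdlib Require Import Classical FunctionalExtensionality PropExtensionality Lia.
From mathcomp Require Import zify.

Set Implicit Arguments.
Unset Strict Implicit.

Section GraphL.
Context {T : Type} (adj : T -> T -> Prop).

Fixpoint wk (x : T) (p : seq T) : Prop :=
  match p with [::] => True | y :: q => adj x y /\ wk y q end.

Definition reach (Q : T -> Prop) (x y : T) (k : nat) : Prop :=
  exists p, wk x p /\ last x p = y /\ (size p <= k)%N /\ List.Forall Q (x :: p).

Lemma wk_cat x p1 p2 : wk x p1 -> wk (last x p1) p2 -> wk x (p1 ++ p2).
Proof. elim: p1 x => [|y q IH] x //= [h1 h2] h3; split => //; exact: IH. Qed.

Lemma reach_trans Q x y z k l : reach Q x y k -> reach Q y z l -> reach Q x z (k + l).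
Proof.
move=> [p1 [w1 [e1 [s1 f1]]]] [p2 [w2 [e2 [s2 f2]]]].
exists (p1 ++ p2); split; first by apply: wk_cat => //; rewrite e1.
split; first by rewrite last_cat e1 e2.
split; first by rewrite size_cat; apply: leq_add.
inversion f2; subst.
change (List.Forall Q ((x :: p1) ++ p2)%list). apply List.Forall_app; split => //.
Qed.

Lemma reach_refl Q x k : Q x -> reach Q x x k.
Proof. move=> h; exists [::]; do 3 split => //; by constructor; [|constructor]. Qed.

Lemma reach_edge Q x y : Q x -> Q y -> adj x y -> reach Q x y 1.
Proof. move=> hx hy a; exists [:: y]; do 3 split => //; by constructor; [|constructor; [|constructor]]. Qed.

Lemma reach_mono Q x y k l : (k <= l)%N -> reach Q x y k -> reach Q x y l.
Proof. move=> kl [p [w [e [s f]]]]; exists p; do 3 split => //; exact: leq_trans kl. Qed.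

Lemma split_in (a : T) s : List.In a s -> exists l1 l2, s = l1 ++ a :: l2.
Proof. move=> h; have [l1 [l2 e]] := List.in_split _ _ h; by exists l1, l2. Qed.

Lemma wk_suffix a l1 b l2 : wk a (l1 ++ b :: l2) -> wk b l2 /\ last a (l1 ++ b :: l2) = last b l2.
Proof.
elim: l1 a => [|y q IH] a /=; first by case.
by case=> _ /IH.
Qed.

Lemma shorten R p x : wk x p -> List.Forall R (x :: p) ->
  exists p', wk x p' /\ last x p' = last x p /\ (size p' <= size p)%N /\
     List.Forall R (x :: p') /\ List.NoDup (x :: p').
Proof.
elim: p x => [|z q IH] x.
  move=> _ f; exists [::]; do 4 split => //. constructor => //. constructor.
move=> /= [axz wq] f.
inversion f as [|? ? Rx fq]; subst.
have [p0 [w0 [e0 [s0 [f0 n0]]]]] := IH z wq fq.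
case: (classic (List.In x (z :: p0))) => hin.
  have [l1 [l2 e]] := split_in hin.
  have [wl2 el2] : wk x l2 /\ last z p0 = last x l2.
    move: e w0; case: l1 => [|y l1'] /=.
      by case=> -> ->.
    by case=> -> -> /wk_suffix.
  exists l2; split => //; split; first by rewrite -el2.
  have hs : size (z :: p0) = (size l1 + (size l2).+1)%N by rewrite e size_cat.
  split; first by move: hs s0 => /= hs s0; lia.
  rewrite e in f0 n0.
  split; first by move: f0 => /List.Forall_app [].

  exact: List.NoDup_app_remove_l n0.
exists (z :: p0); split => //; split => //; split => //.
split; first by constructor.
by constructor.
Qed.

Lemma in_last (x : T) p : List.In (last x p) (x :: p).
Proof. elim: p x => [|y q IH] x /=; [by left | by right; apply: IH]. Qed.

Lemma forall_zip x q w : wk x q -> adj (last x q) w ->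
  List.Forall (fun e => adj e.1 e.2) (zip (x :: q) (rcons q w)).
Proof.
elim: q x => [|y q IH] x /=; first by move=> _ h; constructor => //.
by move=> [a b] h; constructor => //; apply: IH.
Qed.

Lemma circuit_of w x y p :
  adj w x -> adj y w -> wk x p -> last x p = y ->
  List.Forall (fun v => v <> w) (x :: p) -> x <> y ->
  exists c, is_circuit adj c /\ (size c <= size p + 2)%N /\ edge_in_circuit w x c /\ List.In y c.
Proof.
move=> awx ayw wp ep fp nxy.
have [p' [w' [e' [s' [f' n']]]]] := shorten wp fp.
exists [:: w, x & p'].
split.
  split; first by case: p' w' e' s' f' n' => [|? ?] //= _ e'; move: nxy; rewrite -ep -e'.
  split; first by constructor => // hw; inversion f'; subst; clear -hw f'; elim: (x :: p') hw f' => // a l IH /= [<-|h] f; inversion f; subst; [done|exact: IH].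
  rewrite /cyc_edges rot1_cons /=; constructor => //.
  by apply: forall_zip => //; rewrite e' ep.
split; first by rewrite /= addn2; move: s'; lia.
split; first by left; rewrite /cyc_edges rot1_cons /=; left.
right; rewrite -ep -e'; exact: in_last.
Qed.

End GraphL.

Section Grp.
Context {G : Type} (mul : G -> G -> G) (one : G) (inv : G -> G)
  (HG : is_group mul one inv) {Lam : finType} (P : Lam -> G -> Prop)
  (HP : forall lam, is_subgroup mul one inv (P lam)) (S : seq G).

Lemma mulKg x y : mul (inv x) (mul x y) = y.
Proof. by rewrite (Defs.mulA HG) (Defs.mulVg HG) (Defs.mul1g HG). Qed.
Lemma invK x : inv (inv x) = x.
Proof. by rewrite -[RHS](mulKg (inv x)) (Defs.mulVg HG) (Defs.mulg1 HG). Qed.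
Lemma mulKVg x y : mul x (mul (inv x) y) = y.
Proof. by rewrite -{1}(invK x) mulKg. Qed.
Lemma inv_uniq a b : mul a b = one -> b = inv a.
Proof. by move=> h; rewrite -(mulKg a b) h (Defs.mulg1 HG). Qed.
Lemma invM x y : inv (mul x y) = mul (inv y) (inv x).
Proof.
symmetry; apply: inv_uniq.
by rewrite -(Defs.mulA HG) (mulA HG y) (Defs.mulgV HG) (Defs.mul1g HG) (Defs.mulgV HG).
Qed.
Lemma inv1 : inv one = one.
Proof. by rewrite -[LHS](Defs.mulg1 HG) (Defs.mulVg HG). Qed.
Lemma mulg_inj x y z : mul x y = mul x z -> y = z.
Proof. by move=> h; rewrite -(mulKg x y) h mulKg. Qed.

Lemma sub_mem lam p x : P lam p -> P lam (mul p x) <-> P lam x.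
Proof.
case: (HP lam) => h1 [hM hI] hp; split => h.
  by rewrite -(mulKg p x); apply: hM => //; apply: hI.
exact: hM.
Qed.

Notation Vx := (@Vertex G Lam).
Notation act := (@Defs.act G mul inv Lam).
Notation adj := (coned_adj mul inv P S).

Lemma act_inl g h : act g (inl h) = inl (mul g h). Proof. by []. Qed.

Lemma act_lcoset g lam c : act g (inr (lam, lcoset mul inv c (P lam))) = inr (lam, lcoset mul inv (mul g c) (P lam)).
Proof.
rewrite /= /lcoset; congr (inr (_, _)); apply: functional_extensionality => x.
by rewrite invM (Defs.mulA HG).
Qed.

Lemma norm_lc lam A c : is_vertex mul inv P (inr (lam, A)) -> A c -> A = lcoset mul inv c (P lam).
Proof.
move=> [h ->] /= hc; rewrite /lcoset in hc *; apply: functional_extensionality => x.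
apply: propositional_extensionality.
have -> : mul (inv h) x = mul (mul (inv h) c) (mul (inv c) x) by rewrite -(Defs.mulA HG) mulKVg.
exact: sub_mem.
Qed.

Lemma actK g v : act (inv g) (act g v) = v.
Proof.
case: v => [h|[lam A]] /=; first by rewrite mulKg.
congr (inr (_, _)); apply: functional_extensionality => x; by rewrite invK mulKg.
Qed.
Lemma actKV g v : act g (act (inv g) v) = v.
Proof. by rewrite -{1}(invK g) actK. Qed.

Lemma act_vertex g v : is_vertex mul inv P v -> is_vertex mul inv P (act g v).
Proof.
case: v => [h|[lam A]] //= [h ->].
exists (mul g h); rewrite /lcoset; apply: functional_extensionality => x.
by rewrite invM (Defs.mulA HG).
Qed.

Lemma act_adj g u v : adj u v -> adj (act g u) (act g v).
Proof.
move=> [hu [hv a]]; split; first exact: act_vertex.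
split; first exact: act_vertex.
move: a; case: u {hu} => [x|[l1 A]]; case: v {hv} => [y|[l2 B]] //=.
- move=> [nxy [s [hs e]]]; split; first by move/mulg_inj.
  exists s; split => //; case: e => ->; [left|right]; by rewrite (Defs.mulA HG).
- by rewrite mulKg.
- by rewrite mulKg.
Qed.

Lemma reach_act g (Q Q' : Vx -> Prop) x y k :
  (forall z, Q z -> Q' (act g z)) -> reach adj Q x y k -> reach adj Q' (act g x) (act g y) k.
Proof.
move=> hQ [p [w [e [s f]]]]; exists (map (act g) p).
split.
  elim: p x w {e f s} => [|z q IH] x //= [a b]; split; [exact: act_adj | exact: IH].
split; first by rewrite last_map e.
split; first by rewrite size_map.
elim: p x f {w e s} => [|z q IH] x f; inversion f; subst; constructor; auto.
exact: IH.
Qed.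

Lemma word_cons x l : word_prod mul one (x :: l) = mul x (word_prod mul one l).
Proof. by []. Qed.

Lemma cay_fwd (Q : Vx -> Prop) l a : (forall g, Q (inl g)) -> is_S_word inv S l ->
  reach adj Q (inl a) (inl (mul a (word_prod mul one l))) (size l).
Proof.
move=> hQ; elim: l a => [|x l IH] a hw.
  by rewrite /= (Defs.mulg1 HG); apply: reach_refl.
have hx : List.In x S \/ List.In (inv x) S by apply: hw; left.
have hl : is_S_word inv S l by move=> y hy; apply: hw; right.
rewrite word_cons (Defs.mulA HG).
have -> : size (x :: l) = (1 + size l)%N by [].
apply: reach_trans (IH _ hl).
case: (classic (mul a x = a)) => e.
  rewrite e; exact: reach_refl.
apply: reach_edge => //.
split; first by [].
split; first by [].
split; first by move=> h; apply: e; rewrite -h.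
case: hx => hx.
  by exists x; split => //; left.
by exists (inv x); split => //; right; rewrite -(Defs.mulA HG) (Defs.mulgV HG) (Defs.mulg1 HG).
Qed.

Lemma word_rcons l x : word_prod mul one (rcons l x) = mul (word_prod mul one l) x.
Proof.
elim: l => [|y l IH] /=; first by rewrite (Defs.mulg1 HG) (Defs.mul1g HG).
by rewrite IH (Defs.mulA HG).
Qed.

Lemma word_revinv l : word_prod mul one (rev (map inv l)) = inv (word_prod mul one l).
Proof.
elim: l => [|x l IH] /=; first by rewrite inv1.
by rewrite rev_cons word_rcons IH invM.
Qed.

Lemma in_rev_seq (T : Type) (y : T) s : List.In y (rev s) -> List.In y s.
Proof.
elim: s => [|x s IH] //; rewrite rev_cons -cats1 => /List.in_app_iff [/IH h|[<-|[]]].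
  by right. by left.
Qed.

Lemma cay_bwd (Q : Vx -> Prop) l a : (forall g, Q (inl g)) -> is_S_word inv S l ->
  reach adj Q (inl (mul a (word_prod mul one l))) (inl a) (size l).
Proof.
move=> hQ hw.
have hw' : is_S_word inv S (rev (map inv l)).
  move=> y hy; have := in_rev_seq hy; move=> /List.in_map_iff [z [<- hz]].
  rewrite invK; case: (hw z hz); by [right|left].
have := cay_fwd (mul a (word_prod mul one l)) hQ hw'.
by rewrite word_revinv -(Defs.mulA HG) (Defs.mulgV HG) (Defs.mulg1 HG) size_rev size_map.
Qed.


Definition letters := S ++ map inv S.

Fixpoint wl (k : nat) : seq (seq G) :=
  match k with 0 => [:: [::]]
  | k'.+1 => [::] :: List.flat_map (fun a => List.map (cons a) (wl k')) letters end.

Lemma wl_in k l : (forall x, List.In x l -> List.In x letters) -> (size l <= k)%N -> List.In l (wl k).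
Proof.
elim: k l => [|k IH] [|x l] //= h hs; first by left.
  by left.
right; apply/List.in_flat_map; exists x; split; first by apply: h; left.
apply: List.in_map; apply: IH => // y hy; apply: h; by right.
Qed.

Lemma S_letters l : is_S_word inv S l -> forall x, List.In x l -> List.In x letters.
Proof.
move=> hw x hx; rewrite /letters; apply: List.in_or_app; case: (hw x hx) => h; first by left.
right; rewrite -(invK x); exact: List.in_map.
Qed.

Variable n : nat.
Definition BW := List.map (word_prod mul one) (wl n).

Lemma word_BW l : is_S_word inv S l -> (size l <= n)%N -> List.In (word_prod mul one l) BW.
Proof. move=> hw hs; apply: List.in_map; apply: wl_in => //; exact: S_letters. Qed.

Lemma one_BW : List.In one BW.
Proof. have -> : one = word_prod mul one [::] by []. apply: word_BW => //. Qed.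

Lemma sdist_BW a b : Sdist_le mul one inv S n a b -> exists u, List.In u BW /\ b = mul a u.
Proof. move=> [l [hw [hs ->]]]; exists (word_prod mul one l); split => //; exact: word_BW. Qed.

Definition w0 lam : Vx := inr (lam, lcoset mul inv one (P lam)).

Definition vtoG (v : Vx) : seq G := match v with inl g => [:: g] | inr _ => [::] end.

Variable Lf : seq (seq Vx).
Hypothesis hLf : forall lam c, is_circuit adj c -> (size c <= 3 * n + 6)%N ->
  edge_in_circuit (w0 lam) (inl one) c -> List.In c Lf.

Definition X1 := one :: List.flat_map (fun c => List.flat_map vtoG c) Lf.
Definition X := List.flat_map (fun x => List.map (mul x) BW) X1.

Lemma X_mul x u : List.In x X1 -> List.In u BW -> List.In (mul x u) X.
Proof. move=> hx hu; apply/List.in_flat_map; exists x; split => //; exact: List.in_map. Qed.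

Lemma X_BW u : List.In u BW -> List.In u X.
Proof. move=> hu; rewrite -[u](Defs.mul1g HG); apply: X_mul => //; by left. Qed.

Lemma one_X : List.In one X.
Proof. exact: X_BW one_BW. Qed.

Lemma key sigma : is_simplex mul one inv P S n sigma ->
  exists g, forall v, sigma v -> exists c, carrier v c /\ List.In (mul (inv g) c) X.
Proof.
move=> [_ [[b1 hb1] [hvert hadj]]].
case: (classic (exists a, sigma (inl a))) => [[a ha]|noV].
  exists a => v hv; case: (classic (v = inl a)) => [->|nva].
    by exists a; split => //; rewrite (Defs.mulVg HG); exact: one_X.
  have [_ [_ [_ [a' [b [ca [cb hd]]]]]]] := hadj _ _ ha hv (fun e => nva (esym e)).
  rewrite /= in ca; subst a'.
  have [u [hu eb]] := sdist_BW hd; subst b.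
  by exists (mul a u); split => //; rewrite mulKg; exact: X_BW.
case: b1 hb1 => [x hx|[lam A1] hb1]; first by case: noV; exists x.
have hnotl : forall v, sigma v -> exists nu C, v = inr (nu, C).
  by move=> [x|[nu C]] hv; [case: noV; exists x | exists nu, C].
case: (classic (exists b2, sigma b2 /\ b2 <> inr (lam, A1))) => [[b2 [hb2 nb]]|noB2]; last first.
  have [h eh] : is_vertex mul inv P (inr (lam, A1)) by exact: hvert.
  exists h => v hv; case: (classic (v = inr (lam, A1))) => [->|nv]; last by case: noB2; exists v.
  exists h; split; last by rewrite (Defs.mulVg HG); exact: one_X.
  by rewrite eh /= /lcoset (Defs.mulVg HG); case: (HP lam).
have [_ [_ [_ [a [b [ca [cb hd]]]]]]] := hadj _ _ hb1 hb2 (fun e => nb (esym e)).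
exists a => v hv.
case: (classic (v = inr (lam, A1))) => [->|nv1].
  by exists a; split => //; rewrite (Defs.mulVg HG); exact: one_X.
case: (classic (v = b2)) => [->|nv2].
  have [u [hu eb]] := sdist_BW hd.
  by exists b; split => //; rewrite eb mulKg; exact: X_BW.
have [_ [_ [_ [p1 [c1 [cp1 [cc1 [l1 [hw1 [hs1 e1]]]]]]]]]] := hadj _ _ hb1 hv (fun e => nv1 (esym e)).
have [_ [_ [_ [c2 [p2 [cc2 [cp2 [l2 [hw2 [hs2 e2]]]]]]]]]] := hadj _ _ hv hb2 nv2.
have [l0 [hw0 [hs0 e0]]] := hd.
exists c1; split => //.
rewrite e1 (Defs.mulA HG); apply: X_mul; last exact: word_BW.
case: (classic (mul (inv a) p1 = one)) => [->|neq]; first by left.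
right.
have vb1 : is_vertex mul inv P (inr (lam, A1)) by exact: hvert.
have eA1 := norm_lc vb1 ca.
have hb1w : act (inv a) (inr (lam, A1)) = w0 lam by rewrite eA1 act_lcoset (Defs.mulVg HG).
have [mu [A2 eb2]] := hnotl _ hb2.
have [nu [C ev]] := hnotl _ hv.
pose Q := fun z : Vx => z <> inr (lam, A1).
have hQl : forall g, Q (inl g) by [].
have vb2 : is_vertex mul inv P b2 by exact: hvert.
have vv : is_vertex mul inv P v by exact: hvert.
have r1 : reach adj Q (inl a) (inl b) (size l0) by rewrite e0; exact: cay_fwd.
have r2 : reach adj Q (inl b) b2 1.
  apply: reach_edge => //; split => //; split => //; by rewrite eb2 in cb *.
have r3 : reach adj Q b2 (inl p2) 1.
  apply: reach_edge => //; split => //; split => //; by rewrite eb2 in cp2 *.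
have r4 : reach adj Q (inl p2) (inl c2) (size l2) by rewrite e2; exact: cay_bwd.
have r5 : reach adj Q (inl c2) v 1.
  apply: reach_edge => //; split => //; split => //; by rewrite ev in cc2 *.
have r6 : reach adj Q v (inl c1) 1.
  apply: reach_edge => //; split => //; split => //; by rewrite ev in cc1 *.
have r7 : reach adj Q (inl c1) (inl p1) (size l1) by rewrite e1; exact: cay_bwd.
have r := reach_trans r1 (reach_trans r2 (reach_trans r3 (reach_trans r4 (reach_trans r5 (reach_trans r6 r7))))).
have rm : reach adj Q (inl a) (inl p1) (3 * n + 4).
  apply: reach_mono r; lia.
have rt := @reach_act (inv a) Q (fun z => z <> w0 lam) _ _ _ _ rm.
have [p [wp [ep [sp fp]]]] : reach adj (fun z => z <> w0 lam) (inl one) (inl (mul (inv a) p1)) (3 * n + 4).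
  rewrite -(Defs.mulVg HG a); apply: rt => z hz e; apply: hz.
  by rewrite -(actKV a z) e -hb1w actKV.
have hP1 : P lam (mul (inv a) p1) by move: cp1; rewrite eA1.
have awx : adj (w0 lam) (inl one).
  split; first by exists one.
  split => //=; rewrite /lcoset (Defs.mulVg HG); by case: (HP lam).
have ayw : adj (inl (mul (inv a) p1)) (w0 lam).
  split => //; split; first by exists one.
  by rewrite /= /lcoset inv1 (Defs.mul1g HG).
have [c [hc [sc [ec inc]]]] := circuit_of awx ayw wp ep fp (fun e => neq (esym (inl_inj e))).
have sc' : (size c <= 3 * n + 6)%N by apply: leq_trans sc _; move: sp; lia.
have cL := hLf hc sc' ec.
apply/List.in_flat_map; exists c; split => //.
apply/List.in_flat_map; exists (inl (mul (inv a) p1)); split => //=; by left.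
Qed.

End Grp.

Lemma inP_seq (T : eqType) (x : T) s : x \in s -> List.In x s.
Proof.
elim: s => [|y s IH] //; rewrite in_cons => /orP [/eqP ->|h]; [by left | by right; apply: IH].
Qed.

Lemma In_enum (T : finType) (x : T) : List.In x (enum T).
Proof. apply: inP_seq; by rewrite mem_enum. Qed.

Section Fin.
Context {V : Type}.
Fixpoint subs (s : seq V) : seq (seq V) :=
  match s with [::] => [:: [::]] | a :: s' => (subs s' ++ List.map (cons a) (subs s'))%list end.

Lemma subs_ok s (tau : V -> Prop) : (forall v, tau v -> List.In v s) ->
  exists l, List.In l (subs s) /\ forall v, tau v <-> List.In v l.
Proof.
elim: s tau => [|a s IH] tau h.
  exists [::]; split; first by left.
  by move=> v; split => // /h.
have h' : forall v, tau v /\ v <> a -> List.In v s.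
  by move=> v [tv nv]; case: (h v tv) => // e; case: nv.
have [l [hl hi]] := IH (fun v => tau v /\ v <> a) h'.
case: (classic (tau a)) => ta.
  exists (a :: l); split; first by apply: List.in_or_app; right; apply: List.in_map.
  move=> v; case: (classic (v = a)) => [->|nva]; first by split => // _; left.
  split; first by move=> tv; right; apply/hi.
  by case=> [e|/hi []]; [case: nva | ].
exists l; split; first by apply: List.in_or_app; left.
move=> v; case: (classic (v = a)) => [->|nva].
  by split => // /hi [].
by split; [move=> tv; apply/hi | move=> /hi []].
Qed.
End Fin.

Section Main.
Context {G : Type} (mul : G -> G -> G) (one : G) (inv : G -> G)
  (HG : is_group mul one inv) {Lam : finType} (P : Lam -> G -> Prop)
  (HP : forall lam, is_subgroup mul one inv (P lam)) (S : seq G).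

Notation Vx := (@Vertex G Lam).
Notation act := (@Defs.act G mul inv Lam).
Notation adj := (coned_adj mul inv P S).

Lemma main (Hrh : rel_hyperbolic mul inv P S) (n : nat) :
  exists F : seq (Vx -> Prop),
    forall sigma, is_simplex mul one inv P S n sigma ->
      exists g tau, List.In tau F /\
        forall v, sigma v <-> act_set mul inv g tau v.
Proof.
have [Lf hLf] : exists Lf : seq (seq Vx), forall lam c, is_circuit adj c -> (size c <= 3 * n + 6)%N ->
  edge_in_circuit (w0 mul one inv P lam) (inl one) c -> List.In c Lf.
  suff : forall s : seq Lam, exists Lf : seq (seq Vx), forall lam, List.In lam s -> forall c, is_circuit adj c -> (size c <= 3 * n + 6)%N ->
    edge_in_circuit (w0 mul one inv P lam) (inl one) c -> List.In c Lf.
    move=> /(_ (enum Lam)) [Lf h]; exists Lf => lam c; exact: (h lam (In_enum lam) c).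
  elim=> [|l0 s [Lf IH]]; first by exists [::].
  have awx : adj (w0 mul one inv P l0) (inl one).
    split; first by exists one.
    split => //=; rewrite /lcoset (Defs.mulVg HG); by case: (HP l0).
  have [L hL] := Hrh.1 _ _ awx (3 * n + 6).
  exists (L ++ Lf)%list => lam hin c hc hsz he; apply: List.in_or_app; case: hin => [e|hs].
  left; subst lam; exact (hL c hc hsz he).
  right; exact (IH lam hs c hc hsz he).
pose Xs := X mul one inv S n Lf.
pose Cand : seq Vx := (List.map inl Xs ++
   List.flat_map (fun nu => List.map (fun x => inr (nu, lcoset mul inv x (P nu))) Xs) (enum Lam))%list.
exists (List.map (fun l v => List.In v l) (subs Cand)).
move=> sigma hs.
have [g hg] := key HG HP hLf hs.
have hsub : forall w, sigma (act g w) -> List.In w Cand.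
  move=> w hw; rewrite -(actK HG g w).
  have [c [cc hc]] := hg _ hw.
  have vw : is_vertex mul inv P (act g w) by case: hs => [_ [_ [hv _]]]; apply: hv.
  move: (act g w) vw cc hw => [h|[nu A]] vw cc hw.
    rewrite /= in cc; subst h; apply: List.in_or_app; left; exact: List.in_map.
  rewrite (norm_lc HG HP vw cc) (act_lcoset HG); apply: List.in_or_app; right.
  apply/List.in_flat_map; exists nu; split; first exact: In_enum.
  exact: (List.in_map (fun x => inr (nu, lcoset mul inv x (P nu)))).
have [l [hl hi]] := subs_ok hsub.
exists g, (fun v => List.In v l); split; first exact: (List.in_map (fun l v => List.In v l)).
move=> v; split.
  move=> sv; exists (act (inv g) v); split; last by rewrite (actKV HG).
  by apply/hi; rewrite (actKV HG).
by move=> [w [/hi hw ->]].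
Qed.
End Main.

Theorem corollary2p4 (G : Type) (mul : G -> G -> G) (one : G) (inv : G -> G)
  (HG : is_group mul one inv)
  (Lam : finType) (P : Lam -> G -> Prop)
  (HP : forall lam, is_subgroup mul one inv (P lam))
  (S : seq G) (HS : generates mul one inv S)
  (Hrh : rel_hyperbolic mul inv P S)
  (n : nat) (Hn : (1 <= n)%N) :
  exists F : seq (@Vertex G Lam -> Prop),
    forall sigma, is_simplex mul one inv P S n sigma ->
      exists g tau, List.In tau F /\
        forall v, sigma v <-> act_set mul inv g tau v.
Proof. exact: (main HG HP Hrh n). Qed.
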